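(* Assume the standing setup. If $\lambda_1(\boldsymbol\Omega_K)\le1$ then $\mathbf g(1)=\mathbf 1_K$; if $\lambda_1(\boldsymbol\Omega_K)>1$ then $\mathbf g(1)\neq\mathbf 1_K$.
   Context: Standing setup: $K\ge1$, $\boldsymbol\rho=(\rho_k)$ with $\rho_k\in(0,1)$, $\sum\rho_k=1$; $\mathbf S_K=(s_{kl})$ symmetric with $s_{kl}>0$; $\mathbf D_{\mathbf v}$ diagonal with diagonal $\mathbf v$; $\boldsymbol\Omega_K=\mathbf D_{\boldsymbol\rho^{\odot1/2}}\mathbf S_K\mathbf D_{\boldsymbol\rho^{\odot1/2}}$, $\boldsymbol\Gamma_K=\mathbf S_K\mathbf D_{\boldsymbol\rho}$; $\lambda_1$ = largest eigenvalue. For each $N$, $[N]$ is split into consecutive blocks $B_1,\dots,B_K$ with $|B_k|/N\to\rho_k$; $\Sigma_{ij}=s_{kl}$ for $i\in B_k,j\in B_l$; $\mathbf H$ is symmetric with independent standard Gaussian entries on/above the diagonal; $\mathbf X=\mathbf H\odot\boldsymbol\Sigma^{\odot1/2}-N^{-1/2}\mathrm{Diag}(\boldsymbol\Sigma\mathbf 1)$ ($\odot$ Hadamard product); $\mu_X$ is the a.s. limiting spectral distribution of $\mathbf X/\sqrt N$. QVE: for $z\in\mathbb H_-=\{\Im z<0\}$, $\mathbf g(z)$ is the unique solution in $(\mathbb H_+)^K$ of $\mathbf 1_K=z\mathbf g-\mathbf g\odot\boldsymbol\Gamma_K(\mathbf g-\mathbf 1_K)$, with $\sum_k\rho_kg_k(z)=\int(z-\lambda)^{-1}d\mu_X(\lambda)$;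 $\mathbf g$ extends continuously to $\mathbb H_-\cup\mathbb R$ (analytically off $\mathrm{Supp}(\mu_X)$) and $\mathbf g(1)$ denotes the value of this extension at $z=1$. *)

(* Defs.v *)
From HB Require Import structures.
From mathcomp Require Import all_boot all_order all_algebra.
From mathcomp Require Import classical_sets reals.
From mathcomp Require Import complex.
Set Implicit Arguments. Unset Strict Implicit. Unset Printing Implicit Defensive.
Import Order.TTheory GRing.Theory Num.Theory.
Local Open Scope ring_scope.
Local Open Scope complex_scope.

Definition Omega (R : realType) (K : nat) (rho : 'I_K -> R) (S : 'M[R]_K) : 'M[R]_K :=
  \matrix_(k, l) (Num.sqrt (rho k) * S k l * Num.sqrt (rho l)).

Definition Gamma (R : realType) (K : nat) (rho : 'I_K -> R) (S : 'M[R]_K) : 'M[R]_K :=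
  \matrix_(k, l) (S k l * rho l).

(* largest eigenvalue lambda_1 of a (real symmetric) matrix: the supremum
   (= maximum, the set being finite and nonempty for symmetric A) of its
   eigenvalues *)
Definition lambda1 (R : realType) (K : nat) (A : 'M[R]_K) : R :=
  reals.sup [set a : R | eigenvalue A a]%classic.

Definition QVE (R : realType) (K : nat) (Gam : 'M[R]_K) (z : R[i]) (g : 'I_K -> R[i]) : Prop :=
  forall k : 'I_K, 1 = z * g k - g k * (\sum_(l < K) (Gam k l)%:C * (g l - 1)).

(* Main.v *)
Require Import Defs.
From HB Require Import structures.
From mathcomp Require Import all_boot all_order all_algebra.
From mathcomp Require Import classical_sets reals.
From mathcomp Require Import complex.
From mathcomp Require Import sesquilinear spectral.
From mathcomp Require Import ring lra.
Import Order.TTheory GRing.Theory Num.Theory.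
Local Open Scope ring_scope.
Local Open Scope complex_scope.

Section Spec.
Local Open Scope sesquilinear_scope.
Variable R : realType.
Local Notation C := (R[i]).
Variable K : nat.
Variable A : 'M[R]_K.
Hypothesis Asym : A^T = A.
Let Ac : 'M[C]_K := map_mx (real_complex R) A.

Lemma conj_rc (x : R) : (x%:C)^*%R = x%:C.
Proof. by apply: conj_Creal; rewrite complex_real. Qed.

Lemma Ac_herm : Ac \is hermsymmx.
Proof.
apply/is_hermitianmxP; rewrite expr0 scale1r.
by apply/matrixP => i j; rewrite !mxE conj_rc -[in LHS]Asym mxE.
Qed.

Let P := spectralmx Ac.
Let d := spectral_diag Ac.
Let Pu : P \is unitarymx := spectral_unitarymx Ac.
Let Punit : P \in unitmx := spectral_unit Ac.
Lemma Aeq : Ac = invmx P *m diag_mx d *m P.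
Proof. exact/orthomx_spectralP/hermitian_normalmx/Ac_herm. Qed.
Lemma dreal i : d 0 i \is Num.real.
Proof. by have /mxOverP := hermitian_spectral_diag_real Ac_herm; apply. Qed.

Lemma eig_d i : eigenvalue A (complex.Re (d 0 i)).
Proof.
have ev : eigenvalue Ac (d 0 i).
  apply/eigenvalueP; exists (row i P).
    have -> : row i P *m Ac = row i (diag_mx d *m P).
      by rewrite -row_mul Aeq !mulmxA mulmxV // mul1mx.
    by rewrite mul_diag_mx; apply/rowP => j; rewrite !mxE.
  apply/eqP => ri0.
  have : row i (1%:M : 'M[C]_K) = 0.
    by rewrite -(mulmxV Punit) row_mul ri0 mul0mx.
  by move/rowP/(_ i); rewrite !mxE eqxx /= => /eqP; rewrite oner_eq0.
move: ev; rewrite eigenvalue_root_char /Ac -map_char_poly -(RRe_real (dreal i)).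
by rewrite fmorph_root -eigenvalue_root_char.
Qed.

Lemma eig_in a : eigenvalue A a -> exists i, a = complex.Re (d 0 i).
Proof.
case/eigenvalueP => v vA vn0.
pose vc := map_mx (real_complex R) v.
have vcA : vc *m Ac = a%:C *: vc by rewrite /vc /Ac -map_mxM vA map_mxZ.
pose u := vc *m invmx P.
have uD : u *m diag_mx d = a%:C *: u.
  have -> : u *m diag_mx d = vc *m Ac *m invmx P.
    by rewrite /u Aeq !mulmxA mulmxK.
  by rewrite vcA -scalemxAl.
have un0 : u != 0.
  apply/eqP => u0; move/eqP: vn0; apply.
  have : vc = u *m P by rewrite /u mulmxKV.
  rewrite u0 mul0mx => /matrixP vc0; apply/matrixP => i j.
  by move: (vc0 i j); rewrite !mxE => -[].
have [i ui] : exists i, u 0 i != 0.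
  case: (pickP (fun i => u 0 i != 0)) => [i ui|H]; first by exists i.
  exfalso; apply: (negP un0); apply/eqP/rowP => j; rewrite [RHS]mxE.
  by have := H j; rewrite /= => /negbFE/eqP.
exists i.
have E1 : (u *m diag_mx d) 0 i = u 0 i * d 0 i by rewrite mul_mx_diag mxE.
have E2 : (a%:C *: u) 0 i = u 0 i * a%:C by rewrite mxE mulrC.
have Hd : d 0 i = a%:C by apply: (mulIf ui); rewrite mulrC -E1 uD E2 mulrC.
by rewrite Hd.

Qed.

Hypothesis Kpos : (0 < K)%N.

Lemma eig_hassup : has_sup [set a : R | eigenvalue A a]%classic.
Proof.
split.
  by exists (complex.Re (d 0 (Ordinal Kpos))); apply: eig_d.
exists (\sum_i `|complex.Re (d 0 i)|%R) => a /eig_in [i ->].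
apply: le_trans (ler_norm _) _.
by rewrite (bigD1 i) //= lerDl sumr_ge0.
Qed.

Lemma rayleigh (x : 'I_K -> R) :
  \sum_k \sum_l x k * A k l * x l <= lambda1 A * \sum_k x k ^+ 2.
Proof.
pose xc : 'rV[C]_K := \row_k (x k)%:C.
pose w := P *m xc^T.
have Q1 : (xc *m Ac *m xc^T) 0 0 = (\sum_k \sum_l x k * A k l * x l)%:C.
  rewrite !mxE rmorph_sum.
  under [RHS]eq_bigr do rewrite rmorph_sum.
  rewrite [RHS]exchange_big /=; apply: eq_bigr => l _.
  rewrite !mxE big_distrl /=; apply: eq_bigr => k _.
  by rewrite !mxE !rmorphM.
have xP : xc *m P^t* = w^t*.
  apply/rowP => j; rewrite !mxE rmorph_sum; apply: eq_bigr => k _.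
  by rewrite !mxE rmorphM /= conj_rc mulrC.
have Q2 : (xc *m Ac *m xc^T) 0 0 = \sum_i d 0 i * ((w i 0)^*%R * w i 0).
  rewrite Aeq invmx_unitary // !mulmxA xP -(mulmxA _ P) -/w mxE.
  apply: eq_bigr => i _; rewrite mul_mx_diag !mxE.
  by rewrite mulrA [_ * d 0 i]mulrC.
have Q3 : \sum_i (w i 0)^*%R * w i 0 = (\sum_k x k ^+ 2)%:C.
  have -> : \sum_i (w i 0)^*%R * w i 0 = (w^t* *m w) 0 0.
    by rewrite mxE; apply: eq_bigr => i _; rewrite !mxE.
  rewrite /w -xP -mulmxA (mulmxA _ P) -invmx_unitary // mulVmx // mul1mx.
  rewrite mxE rmorph_sum; apply: eq_bigr => k _.
  by rewrite !mxE rmorphM.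
have HS := eig_hassup.
rewrite -lecR -Q1 Q2 rmorphM /= -Q3 mulr_sumr.
apply: ler_sum => i _.
apply: ler_wpM2r; first by rewrite mulrC mul_conjC_ge0.
rewrite -(RRe_real (dreal i)) lecR.
exact: (sup_upper_bound HS (eig_d i)).
Qed.
End Spec.

Section Aux.
Context {R : realType}.
Local Notation C := (R[i]).

Definition nrm (w : C) : R := Num.sqrt (complex.Re w ^+ 2 + complex.Im w ^+ 2).

Lemma normE (w : C) : `|w| = (nrm w)%:C.
Proof. by rewrite normc_def. Qed.

Lemma nrm_ge0 w : 0 <= nrm w. Proof. exact: sqrtr_ge0. Qed.

Lemma nrm_sqr w : nrm w ^+ 2 = complex.Re w ^+ 2 + complex.Im w ^+ 2.
Proof. by rewrite sqr_sqrtr // addr_ge0 // sqr_ge0. Qed.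

Lemma nrm_eq0 w : nrm w = 0 -> w = 0.
Proof. by move=> h; apply/eqP; rewrite -normr_eq0 normE h. Qed.

Lemma nrmD a b : nrm (a + b) <= nrm a + nrm b.
Proof. by rewrite -lecR rmorphD /= -!normE ler_normD. Qed.

Lemma nrmM a b : nrm (a * b) = nrm a * nrm b.
Proof. by apply: complexI; rewrite rmorphM /= -!normE normrM. Qed.

Lemma nrmRC (c : R) : nrm c%:C = `|c|.
Proof. by rewrite /nrm /= expr0n /= addr0 sqrtr_sqr. Qed.

Lemma nrm1 : nrm 1 = 1.
Proof. by rewrite (_ : 1 = 1%:C) // nrmRC normr1. Qed.

Lemma nrmB a b : nrm (a - b) = nrm (b - a).
Proof. by apply: complexI; rewrite -!normE distrC. Qed.

Lemma nrmN a : nrm (- a) = nrm a.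
Proof. by apply: complexI; rewrite -!normE normrN. Qed.

Lemma nrm_sum (I : Type) (r : seq I) (F : I -> C) :
  nrm (\sum_(i <- r) F i) <= \sum_(i <- r) nrm (F i).
Proof.
elim: r => [|x r IH]; first by rewrite !big_nil (_ : 0 = 0%:C) // nrmRC normr0.
rewrite !big_cons; apply: le_trans (nrmD _ _) _; exact: lerD.
Qed.

Lemma nrm_dist a b : `|nrm a - nrm b| <= nrm (a - b).
Proof.
rewrite ler_norml; apply/andP; split.
- have := nrmD (b - a) a; rewrite subrK nrmB; lra.
- have := nrmD (a - b) b; rewrite subrK; lra.
Qed.

Lemma nrm_lt (a : C) e : `|a| < e%:C -> nrm a < e.
Proof. by rewrite normE ltcR. Qed.

Lemma ReM (x y : C) : complex.Re (x * y) = complex.Re x * complex.Re y - complex.Im x * complex.Im y.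
Proof. by case: x => a b; case: y => c d. Qed.

Lemma ImM (x y : C) : complex.Im (x * y) = complex.Re x * complex.Im y + complex.Im x * complex.Re y.
Proof. by case: x => a b; case: y => c d /=; rewrite addrC. Qed.

Lemma Re_rc (c : R) (w : C) : complex.Re (c%:C * w) = c * complex.Re w.
Proof. by rewrite ReM /= mul0r subr0. Qed.

Lemma Im_rc (c : R) (w : C) : complex.Im (c%:C * w) = c * complex.Im w.
Proof. by rewrite ImM /= mul0r addr0. Qed.

Lemma Re_sum (I : Type) (r : seq I) (F : I -> C) :
  complex.Re (\sum_(i <- r) F i) = \sum_(i <- r) complex.Re (F i).
Proof. by rewrite (@raddf_sum _ _ (@complex.Re R)). Qed.

Lemma Im_sum (I : Type) (r : seq I) (F : I -> C) :
  complex.Im (\sum_(i <- r) F i) = \sum_(i <- r) complex.Im (F i).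
Proof. by rewrite (@raddf_sum _ _ (@complex.Im R)). Qed.

Lemma Im_inv (x : C) : complex.Im (x^-1) = - complex.Im x / (complex.Re x ^+ 2 + complex.Im x ^+ 2).
Proof. by case: x => a b /=; rewrite mulNr. Qed.

Lemma lim0R (a m : R) : 0 <= m -> (forall d, 0 < d -> d <= 1 -> a <= d * m) -> a <= 0.
Proof.
move=> hm H; rewrite leNgt; apply/negP => ha.
have hp : 0 < a + m + 1 by lra.
have d0 : 0 < a / (a + m + 1) by rewrite divr_gt0.
have d1 : a / (a + m + 1) <= 1 by rewrite ler_pdivrMr //; lra.
move: (H _ d0 d1); rewrite mulrAC ler_pdivlMr //; nra.
Qed.

Lemma amgm (X Y t : R) : 0 < t -> 2 * (X * Y) <= X ^+ 2 * t + Y ^+ 2 / t.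
Proof.
move=> t0.
have e : X ^+ 2 * t + Y ^+ 2 / t - 2 * (X * Y) = (X * t - Y) ^+ 2 / t.
  by field; rewrite gt_eqF.
have : 0 <= (X * t - Y) ^+ 2 / t by rewrite divr_ge0 ?sqr_ge0 ?ltW.
rewrite -e; lra.
Qed.

End Aux.

Section Main.
Variable R : realType.
Local Notation C := (R[i]).
Variable K : nat.
Variable rho : 'I_K -> R.
Variable S : 'M[R]_K.
Variable g : C -> 'I_K -> C.
Hypothesis Kpos : (0 < K)%N.
Hypothesis rhoP : forall k, 0 < rho k < 1.
Hypothesis Ssym : S^T = S.
Hypothesis Spos : forall k l, 0 < S k l.
Hypothesis gH : forall z : C, complex.Im z < 0 ->
     (forall k, 0 < complex.Im (g z k)) /\ QVE (Gamma rho S) z (g z).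
Hypothesis gC : forall e : R, 0 < e -> exists2 d : R, 0 < d &
     forall z : C, complex.Im z <= 0 -> `|z - 1| < d%:C ->
       forall k, `|g z k - g 1 k| < e%:C.

Local Notation G := (g 1).

Lemma rho0 k : 0 < rho k. Proof. by case/andP: (rhoP k). Qed.
Lemma GamE k l : Gamma rho S k l = S k l * rho l. Proof. by rewrite mxE. Qed.
Lemma Gam0 k l : 0 <= Gamma rho S k l.
Proof. by rewrite GamE mulr_ge0 // ltW ?rho0. Qed.

Lemma approx e : 0 < e -> exists z : C,
  [/\ complex.Im z < 0, nrm (z - 1) < e & forall k, nrm (g z k - G k) < e].
Proof.
move=> e0; have [d d0 Hd] := gC e e0.
pose r := Num.min d e / 2.
have r0 : 0 < r by rewrite divr_gt0 // lt_min d0 e0.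
have rd : r < d by rewrite /r; have := ge_min d d e; rewrite lexx /=; lra.
have re : r < e by rewrite /r; have := ge_min e d e; rewrite lexx orbT; lra.
exists (1 - r *i).
have nz : nrm (1 - r *i - 1) = r.
  rewrite /nrm /= (_ : (1 - 0 - 1 : R) = 0); last by ring.
  rewrite (_ : (0 - r - 0 : R) = - r); last by ring.
  by rewrite expr0n /= add0r sqrrN sqrtr_sqr gtr0_norm.
split.
- rewrite /=; lra.
- by rewrite nz.
- move=> k; apply: nrm_lt; apply: Hd.
  + rewrite /=; lra.
  + by rewrite normE nz ltcR.
Qed.

Lemma nrmN1 : nrm (-1 : C) = 1.
Proof. by rewrite (_ : -1 = (-1)%:C) ?nrmRC ?normrN ?normr1 // rmorphN. Qed.

Lemma nrm_sub1 (w : C) : nrm (w - 1) <= nrm w + 1.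
Proof. by apply: le_trans (nrmD _ _) _; rewrite nrmN1. Qed.

Lemma nrm_sum_le (F : 'I_K -> C) (c : 'I_K -> R) :
  (forall l, 0 <= c l) ->
  nrm (\sum_l (c l)%:C * F l) <= \sum_l c l * nrm (F l).
Proof.
move=> c0; apply: le_trans (nrm_sum _ _ _) _; apply: ler_sum => l _.
by rewrite nrmM nrmRC ger0_norm.
Qed.

Lemma G_qve : QVE (Gamma rho S) 1 G.
Proof.
move=> k.
set sG := \sum_l (Gamma rho S k l)%:C * (G l - 1).
pose M := nrm (G k) + 2 + \sum_l Gamma rho S k l * (nrm (G l) + 1)
          + (nrm (G k) + 1) * \sum_l Gamma rho S k l.
suff : nrm (1 - (1 * G k - G k * sG)) <= 0.
  move=> h; apply/eqP; rewrite -subr_eq0; apply/eqP/nrm_eq0.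
  by apply/le_anti; rewrite h nrm_ge0.
have SG0 : 0 <= \sum_l Gamma rho S k l by apply: sumr_ge0 => l _; apply: Gam0.
have SG1 : 0 <= \sum_l Gamma rho S k l * (nrm (G l) + 1).
  apply: sumr_ge0 => l _; apply: mulr_ge0; first exact: Gam0.
  by have := nrm_ge0 (G l); lra.
have M0 : 0 <= M.
  rewrite /M; have := nrm_ge0 (G k); have : 0 <= (nrm (G k) + 1) * \sum_l Gamma rho S k l.
    by apply: mulr_ge0 => //; have := nrm_ge0 (G k); lra.
  lra.
apply: (@lim0R _ _ M M0) => d d0 d1.
have [z [zIm z1 zg]] := approx d d0.
have [_ Q] := gH z zIm.
have Qk := Q k.
set a := g z k in Qk *.
set sg := \sum_l (Gamma rho S k l)%:C * (g z l - 1) in Qk.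
have E : (z * a - G k) - (a * sg - G k * sG) = (z * a - a * sg) - (1 * G k - G k * sG).
  by ring.
rewrite -Qk in E.
rewrite -E.
have ga : nrm a <= nrm (G k) + d.
  have := nrmD (a - G k) (G k); rewrite subrK; have := zg k; rewrite -/a; lra.
have B1 : nrm (z * a - G k) <= d * nrm a + d.
  have -> : z * a - G k = (z - 1) * a + (a - G k) by ring.
  apply: le_trans (nrmD _ _) _; rewrite nrmM; apply: lerD.
    by apply: ler_wpM2r; [exact: nrm_ge0|exact: ltW].
  by apply: ltW; exact: zg.
have B2 : nrm sG <= \sum_l Gamma rho S k l * (nrm (G l) + 1).
  apply: le_trans (nrm_sum_le _ _ (Gam0 k)) _; apply: ler_sum => l _.
  by apply: ler_wpM2l; [exact: Gam0|exact: nrm_sub1].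
have B3 : nrm (sg - sG) <= d * \sum_l Gamma rho S k l.
  have -> : sg - sG = \sum_l (Gamma rho S k l)%:C * (g z l - G l).
    by rewrite /sg /sG -sumrB; apply: eq_bigr => l _; ring.
  apply: le_trans (nrm_sum_le _ _ (Gam0 k)) _; rewrite mulr_sumr; apply: ler_sum => l _.
  by rewrite [d * _]mulrC; apply: ler_wpM2l; [exact: Gam0|exact/ltW/zg].
have B4 : nrm (a * sg - G k * sG) <= d * nrm sG + nrm a * nrm (sg - sG).
  have -> : a * sg - G k * sG = (a - G k) * sG + a * (sg - sG) by ring.
  apply: le_trans (nrmD _ _) _; rewrite !nrmM; apply: lerD => //.
  by apply: ler_wpM2r; [exact: nrm_ge0|exact/ltW/zg].
have F1 : d * nrm a <= d * (nrm (G k) + 1).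
  by apply: ler_wpM2l; [exact: ltW|lra].
have F2 : nrm a * nrm (sg - sG) <= (nrm (G k) + 1) * (d * \sum_l Gamma rho S k l).
  apply: ler_pM => //; [exact: nrm_ge0|exact: nrm_ge0|lra].
have F3 : d * nrm sG <= d * \sum_l Gamma rho S k l * (nrm (G l) + 1).
  by apply: ler_wpM2l; [exact: ltW|].
have : nrm ((z * a - G k) - (a * sg - G k * sG)) <= nrm (z * a - G k) + nrm (a * sg - G k * sG).
  by apply: le_trans (nrmD _ _) _; rewrite nrmN.
rewrite /M; lra.
Qed.

Lemma im_id (z : C) (gz : 'I_K -> C) k : QVE (Gamma rho S) z gz -> gz k != 0 ->
  complex.Im (gz k) / (complex.Re (gz k) ^+ 2 + complex.Im (gz k) ^+ 2)
  = - complex.Im z + \sum_l Gamma rho S k l * complex.Im (gz l).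
Proof.
move=> /(_ k) Q gk0.
have : (gz k)^-1 = z - \sum_l (Gamma rho S k l)%:C * (gz l - 1).
  apply: (mulfI gk0); rewrite mulfV // mulrBr [gz k * z]mulrC.
  exact: Q.
move=> /(congr1 (@complex.Im R)); rewrite Im_inv raddfB /= Im_sum.
move=> h.
have E : \sum_l complex.Im ((Gamma rho S k l)%:C * (gz l - 1)) = \sum_l Gamma rho S k l * complex.Im (gz l).
  by apply: eq_bigr => i _; rewrite Im_rc raddfB /= subr0.
rewrite E mulNr in h; lra.
Qed.

Lemma stab_fin (z : C) : complex.Im z < 0 -> forall xi : 'I_K -> R,
  \sum_k \sum_l (S k l * rho k * rho l * xi k * xi l) * (nrm (g z k) * nrm (g z l))
  <= \sum_k rho k * xi k ^+ 2.
Proof.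
move=> zIm xi; have [vpos Q] := gH z zIm.
pose v k := complex.Im (g z k).
pose n2 k := complex.Re (g z k) ^+ 2 + complex.Im (g z k) ^+ 2.
pose q k := nrm (g z k).
have gk0 k : g z k != 0.
  by apply/eqP => h; move: (vpos k); rewrite h /= ltxx.
have n2pos k : 0 < n2 k.
  have := vpos k; rewrite /n2 => h.
  have : 0 < complex.Im (g z k) ^+ 2 by rewrite exprn_gt0.
  have := sqr_ge0 (complex.Re (g z k)); lra.
have q2 k : q k ^+ 2 = n2 k by rewrite /q nrm_sqr.
have key k : \sum_l S k l * rho l * v l <= v k / n2 k.
  rewrite /v /n2 (im_id _ _ _ Q (gk0 k)).
  have -> : \sum_l Gamma rho S k l * complex.Im (g z l) = \sum_l S k l * rho l * complex.Im (g z l).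
    by apply: eq_bigr => l _; rewrite GamE.
  lra.
pose A k l := (q k * xi k) ^+ 2 * (v l / v k).
pose c k l := S k l * rho k * rho l.
have c0 k l : 0 <= c k l by rewrite /c !mulr_ge0 // ltW ?rho0.
have T k l : 2 * ((c k l * xi k * xi l) * (q k * q l)) <= c k l * (A k l + A l k).
  have -> : 2 * ((c k l * xi k * xi l) * (q k * q l)) = c k l * (2 * ((q k * xi k) * (q l * xi l))) by ring.
  apply: ler_wpM2l => //.
  rewrite /A [v k / v l](_ : _ = (v l / v k)^-1); last by rewrite invf_div.
  by apply: amgm; rewrite divr_gt0 // ; apply: vpos.
have cs k l : c k l = c l k.
  have Sc : S k l = S l k by rewrite -{1}Ssym mxE.
  by rewrite /c Sc; ring.
have sA : \sum_k \sum_l c k l * A l k = \sum_k \sum_l c k l * A k l.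
  rewrite exchange_big /=; apply: eq_bigr => k _; apply: eq_bigr => l _.
  by rewrite cs.
have sB : \sum_k \sum_l c k l * A k l <= \sum_k rho k * xi k ^+ 2.
  apply: ler_sum => k _.
  have -> : \sum_l c k l * A k l = (rho k * (q k * xi k) ^+ 2 / v k) * \sum_l S k l * rho l * v l.
    rewrite mulr_sumr; apply: eq_bigr => l _; rewrite /c /A; field.
    by rewrite (gt_eqF (vpos k)).
  apply: le_trans (ler_wpM2l _ (key k)) _.
    apply: divr_ge0; last exact: ltW (vpos k).
    by apply: mulr_ge0; [exact: ltW (rho0 k)|exact: sqr_ge0].
  rewrite exprMn q2 (_ : rho k * (n2 k * xi k ^+ 2) / v k * (v k / n2 k) = rho k * xi k ^+ 2) //.
  field.
  by rewrite (gt_eqF (vpos k)) (gt_eqF (n2pos k)).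
have : 2 * \sum_k \sum_l (c k l * xi k * xi l) * (q k * q l)
       <= \sum_k \sum_l c k l * A k l + \sum_k \sum_l c k l * A l k.
  rewrite mulr_sumr -big_split /=; apply: ler_sum => k _.
  rewrite mulr_sumr -big_split /=; apply: ler_sum => l _.
  by rewrite -mulrDr.
rewrite sA.
have -> : \sum_k \sum_l (S k l * rho k * rho l * xi k * xi l) * (nrm (g z k) * nrm (g z l))
  = \sum_k \sum_l (c k l * xi k * xi l) * (q k * q l) by [].
lra.
Qed.

Lemma quad_limit (c : 'I_K -> 'I_K -> R) (q : 'I_K -> R) (B : R) :
  (forall e, 0 < e -> exists q' : 'I_K -> R,
     (forall k, `|q' k - q k| < e) /\ \sum_k \sum_l c k l * (q' k * q' l) <= B) ->
  \sum_k \sum_l c k l * (q k * q l) <= B.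
Proof.
move=> H.
pose M := \sum_k \sum_l `|c k l| * (`|q k| + `|q l| + 1).
have M0 : 0 <= M.
  apply: sumr_ge0 => k _; apply: sumr_ge0 => l _; apply: mulr_ge0 => //.
  have := normr_ge0 (q k); have := normr_ge0 (q l); lra.
suff : \sum_k \sum_l c k l * (q k * q l) - B <= 0 by lra.
apply: (@lim0R _ _ M M0) => d d0 d1.
have [q' [hq hB]] := H d d0.
suff : \sum_k \sum_l c k l * (q k * q l) - \sum_k \sum_l c k l * (q' k * q' l) <= d * M by lra.
rewrite -sumrB /M mulr_sumr; apply: ler_sum => k _.
rewrite -sumrB mulr_sumr; apply: ler_sum => l _.
rewrite -mulrBr; apply: le_trans (ler_norm _) _; rewrite normrM mulrCA.
apply: ler_wpM2l => //.
have -> : q k * q l - q' k * q' l = q k * (q l - q' l) + (q k - q' k) * q' l by ring.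
have e1 : `|q l - q' l| <= d by rewrite distrC ltW.
have e2 : `|q k - q' k| <= d by rewrite distrC ltW.
have e3 : `|q' l| <= `|q l| + 1.
  have := ler_normD (q l) (q' l - q l); rewrite addrC subrK.
  have := hq l; lra.
apply: le_trans (ler_normD _ _) _; rewrite !normrM.
have f1 : `|q k| * `|q l - q' l| <= `|q k| * d by apply: ler_wpM2l.
have f2 : `|q k - q' k| * `|q' l| <= d * (`|q l| + 1) by apply: ler_pM.
lra.
Qed.

Lemma stab_lim (xi : 'I_K -> R) :
  \sum_k \sum_l (S k l * rho k * rho l * xi k * xi l) * (nrm (G k) * nrm (G l))
  <= \sum_k rho k * xi k ^+ 2.
Proof.
apply: (quad_limit (fun k l => S k l * rho k * rho l * xi k * xi l) (fun k => nrm (G k))).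
move=> e e0; have [z [zIm _ zg]] := approx e e0.
exists (fun k => nrm (g z k)); split.
  by move=> k; apply: le_lt_trans (nrm_dist _ _) (zg k).
exact: stab_fin.
Qed.

Lemma core_real (m q : 'I_K -> R) :
  (forall k, 0 <= m k) -> (forall k, 0 < q k) ->
  (forall k, m k <= q k * \sum_l S k l * rho l * m l) ->
  (forall xi : 'I_K -> R, \sum_k \sum_l (S k l * rho k * rho l * xi k * xi l) * (q k * q l)
      <= \sum_k rho k * xi k ^+ 2) ->
  (forall xi : 'I_K -> R, \sum_k \sum_l S k l * rho k * rho l * xi k * xi l
      <= \sum_k rho k * xi k ^+ 2) ->
  forall k, m k = 0 \/ q k = 1.
Proof.
move=> m0 q0 hb Hs Hr.
pose r k := Num.sqrt (q k).
have r0 k : 0 < r k by rewrite sqrtr_gt0.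
have r2 k : r k ^+ 2 = q k by rewrite sqr_sqrtr // ltW.
pose al k := m k / r k.
have al0 k : 0 <= al k by rewrite divr_ge0 // ltW.
have mE k : m k = al k * r k by rewrite /al divfK // gt_eqF.
pose c k l := S k l * rho k * rho l.
have c0 k l : 0 <= c k l by rewrite /c !mulr_ge0 // ltW ?rho0.
pose X := \sum_k rho k * al k ^+ 2.
have hc : X <= \sum_k \sum_l c k l * (m k * m l).
  apply: ler_sum => k _.
  have qk0 : q k != 0 by rewrite gt_eqF.
  have -> : rho k * al k ^+ 2 = (rho k * m k / q k) * m k.
    by rewrite /al expr_div_n r2; field.
  have -> : \sum_l c k l * (m k * m l) = (rho k * m k / q k) * (q k * \sum_l S k l * rho l * m l).
    rewrite mulrCA mulr_sumr mulr_sumr; apply: eq_bigr => l _; rewrite /c; field.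
    exact: qk0.
  apply: ler_wpM2l; last exact: hb.
  by rewrite divr_ge0 ?mulr_ge0 // ltW ?rho0.
have hs := Hs al.
have hr := Hr al.
pose a k l := c k l * al k * al l.
pose b k l := c k l * al k * al l * (q k * q l).
pose T k l := c k l * al k * al l * ((1 + q k * q l) / 2 - r k * r l).
have T0 k l : 0 <= T k l.
  rewrite /T; apply: mulr_ge0.
    by apply: mulr_ge0; [apply: mulr_ge0|]; [exact: c0|exact: al0|exact: al0].
  have -> : (1 + q k * q l) / 2 - r k * r l = (1 - r k * r l) ^+ 2 / 2.
    by rewrite -r2 -(r2 l); field.
  by rewrite divr_ge0 ?sqr_ge0.
have TE k l : T k l = (a k l + b k l) / 2 - c k l * (m k * m l).
  rewrite /T /a /b !mE -r2 -(r2 l); ring.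
have E : \sum_k \sum_l T k l = (\sum_k \sum_l a k l + \sum_k \sum_l b k l) / 2
           - \sum_k \sum_l c k l * (m k * m l).
  rewrite mulrDl !mulr_suml -big_split -sumrB /=; apply: eq_bigr => k _.
  rewrite !mulr_suml -big_split -sumrB /=; apply: eq_bigr => l _.
  by rewrite TE; field.
have ha : \sum_k \sum_l a k l <= X by [].
have hb' : \sum_k \sum_l b k l <= X by [].
have hT : \sum_k \sum_l T k l <= 0 by rewrite E; lra.
move=> k.
have Tk : T k k <= 0.
  apply: le_trans hT.
  rewrite (bigD1 k) //= (bigD1 k) //=.
  have := @sumr_ge0 _ _ (index_enum _) (fun l => l != k) (T k) (fun l _ => T0 k l).
  have : 0 <= \sum_(i | i != k) \sum_l T i l.
    by apply: sumr_ge0 => i _; apply: sumr_ge0 => l _.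
  lra.
have Tk0 : T k k = 0 by apply/le_anti; rewrite Tk T0.
have : c k k * (al k ^+ 2 * (1 - q k) ^+ 2) = 0.
  rewrite -[RHS](_ : 2 * T k k = 0); last by rewrite Tk0 mulr0.
  by rewrite /T -(r2 k); field.
have ck0 : c k k != 0.
  by rewrite /c gt_eqF // !mulr_gt0 ?rho0.
move/eqP; rewrite mulf_eq0 (negbTE ck0) /= mulf_eq0 !sqrf_eq0 subr_eq0.
case/orP => [/eqP al0k|/eqP q1]; last by right.
by left; rewrite mE al0k mul0r.
Qed.

Lemma Osym : (Omega rho S)^T = Omega rho S.
Proof.
apply/matrixP => i j; rewrite !mxE.
have -> : S j i = S i j by rewrite -[in LHS]Ssym mxE.
by ring.
Qed.

Lemma sq_rho k : Num.sqrt (rho k) ^+ 2 = rho k.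
Proof. by rewrite sqr_sqrtr // ltW ?rho0. Qed.

Lemma srho0 k : Num.sqrt (rho k) != 0.
Proof. by rewrite gt_eqF // sqrtr_gt0 rho0. Qed.

Lemma rayleigh_rho : lambda1 (Omega rho S) <= 1 -> forall xi : 'I_K -> R,
  \sum_k \sum_l S k l * rho k * rho l * xi k * xi l <= \sum_k rho k * xi k ^+ 2.
Proof.
move=> hl xi.
have := @rayleigh R K (Omega rho S) Osym Kpos (fun k => Num.sqrt (rho k) * xi k).
have -> : \sum_k \sum_l Num.sqrt (rho k) * xi k * Omega rho S k l * (Num.sqrt (rho l) * xi l)
  = \sum_k \sum_l S k l * rho k * rho l * xi k * xi l.
  apply: eq_bigr => k _; apply: eq_bigr => l _; rewrite mxE.
  rewrite -[rho k in RHS]sq_rho -[rho l in RHS]sq_rho; ring.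
have -> : \sum_k (Num.sqrt (rho k) * xi k) ^+ 2 = \sum_k rho k * xi k ^+ 2.
  by apply: eq_bigr => k _; rewrite exprMn sq_rho.
have : 0 <= \sum_k rho k * xi k ^+ 2.
  by apply: sumr_ge0 => k _; rewrite mulr_ge0 ?sqr_ge0 // ltW ?rho0.
move=> Y0 h; apply: le_trans h _.
by rewrite -[X in _ <= X]mul1r ler_wpM2r.
Qed.

Lemma part2 : 1 < lambda1 (Omega rho S) -> (forall xi : 'I_K -> R,
  \sum_k \sum_l S k l * rho k * rho l * xi k * xi l <= \sum_k rho k * xi k ^+ 2) -> False.
Proof.
move=> hl Hs.
have hs : has_sup [set a : R | eigenvalue (Omega rho S) a]%classic.
  case: (boolp.pselect (has_sup [set a : R | eigenvalue (Omega rho S) a]%classic)) => // nh.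
  by move: hl; rewrite /lambda1 sup_out // ltr10.
have e0 : 0 < lambda1 (Omega rho S) - 1 by rewrite subr_gt0.
have [a Ea ha] := sup_adherent e0 hs.
have a1 : 1 < a by move: ha; rewrite /lambda1; lra.
case/eigenvalueP: Ea => u uO un0.
pose xi k := u 0 k / Num.sqrt (rho k).
have := Hs xi.
have -> : \sum_k \sum_l S k l * rho k * rho l * xi k * xi l = a * \sum_k u 0 k ^+ 2.
  rewrite exchange_big /= mulr_sumr; apply: eq_bigr => l _.
  transitivity ((u *m Omega rho S) 0 l * u 0 l).
    rewrite !mxE mulr_suml; apply: eq_bigr => k _; rewrite !mxE /xi.
    move: (sq_rho k) (sq_rho l) (srho0 k) (srho0 l).
    generalize (Num.sqrt (rho k)) (Num.sqrt (rho l)) => sk sl hk hl2 hk0 hl0.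
    by rewrite -hk -hl2; field; rewrite hk0 hl0.
  by rewrite uO mxE expr2 mulrA.
have -> : \sum_k rho k * xi k ^+ 2 = \sum_k u 0 k ^+ 2.
  apply: eq_bigr => k _; rewrite /xi.
  move: (sq_rho k) (srho0 k); generalize (Num.sqrt (rho k)) => sk hk hk0.
  by rewrite -hk; field.
move=> h.
have Y0 : \sum_k u 0 k ^+ 2 <= 0 by nra.
have Y : \sum_k u 0 k ^+ 2 = 0.
  by apply/le_anti; rewrite Y0 /=; apply: sumr_ge0 => k _; exact: sqr_ge0.
have Z : forall k, u 0 k = 0.
  move=> k; have := psumr_eq0P (fun i _ => sqr_ge0 (u 0 i)) Y (i:=k) isT.
  by move/eqP; rewrite sqrf_eq0 => /eqP.
apply: (negP un0); apply/eqP/rowP => k; rewrite mxE; exact: Z.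
Qed.

Lemma G_eq k : G k - 1 = G k * \sum_l (Gamma rho S k l)%:C * (G l - 1).
Proof.
have Q := G_qve k.
transitivity (G k - (1 * G k - G k * \sum_l (Gamma rho S k l)%:C * (G l - 1))); last by ring.
by rewrite -Q.
Qed.

Lemma Gk0 k : G k != 0.
Proof.
apply/eqP => h; have := G_qve k; rewrite h !mul0r mulr0 subr0 => /eqP.
by rewrite oner_eq0.
Qed.

Lemma final_real : (forall k, nrm (G k) = 1) -> forall k, G k = 1.
Proof.
move=> hn.
pose X k := complex.Re (G k).
pose Y k := complex.Im (G k).
have hX k : X k ^+ 2 + Y k ^+ 2 = 1 by rewrite /X /Y -nrm_sqr hn expr1n.
have hX1 k : X k <= 1 by have := hX k; have := sqr_ge0 (Y k); nra.
pose P k := \sum_l Gamma rho S k l * (X l - 1).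
pose T k := \sum_l Gamma rho S k l * Y l.
have eqs k : 1 = X k - (X k * P k - Y k * T k) /\ 0 = Y k - (X k * T k + Y k * P k).
  have Q := G_qve k; rewrite mul1r in Q.
  have sRe : complex.Re (\sum_l (Gamma rho S k l)%:C * (G l - 1)) = P k.
    by rewrite Re_sum; apply: eq_bigr => l _; rewrite Re_rc raddfB.
  have sIm : complex.Im (\sum_l (Gamma rho S k l)%:C * (G l - 1)) = T k.
    by rewrite Im_sum; apply: eq_bigr => l _; rewrite Im_rc raddfB /= subr0.
  split.
  - have := congr1 (@complex.Re R) Q; rewrite raddfB /= ReM sRe sIm => <-.
    by [].
  - have := congr1 (@complex.Im R) Q; rewrite raddfB /= ImM sRe sIm => <-.
    by [].
have hP k : P k = 1 - X k.
  case: (eqs k) => H1 H2; have H0 := hX k.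
  have e1 : X k * (X k - (X k * P k - Y k * T k)) + Y k * (Y k - (X k * T k + Y k * P k))
     = (X k ^+ 2 + Y k ^+ 2) * (1 - P k) by ring.
  rewrite -H1 -H2 H0 in e1; lra.
have hP0 k : P k <= 0.
  apply: sumr_le0 => l _; apply: mulr_ge0_le0; first exact: Gam0.
  by have := hX1 l; lra.
move=> k.
have Xk : X k = 1 by have := hP k; have := hP0 k; have := hX1 k; lra.
have Yk : Y k = 0.
  have := hX k; rewrite Xk expr1n => h.
  by apply/eqP; rewrite -sqrf_eq0; apply/eqP; lra.
apply/eqP; rewrite eq_complex; apply/andP; split; apply/eqP.
  exact: Xk.
exact: Yk.
Qed.

Lemma main_sec : (lambda1 (Omega rho S) <= 1 -> G = (fun _ => 1)) /\
  (1 < lambda1 (Omega rho S) -> G <> (fun _ => 1)).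
Proof.
split.
- move=> hl.
  have hr := rayleigh_rho hl.
  have q0 k : 0 < nrm (G k).
    rewrite lt_neqAle nrm_ge0 andbT; apply/eqP => h.
    by move: (Gk0 k); rewrite (nrm_eq0 _ (esym h)) eqxx.
  have hb k : nrm (G k - 1) <= nrm (G k) * \sum_l S k l * rho l * nrm (G l - 1).
    rewrite G_eq nrmM; apply: ler_wpM2l; first exact: nrm_ge0.
    apply: le_trans (nrm_sum_le _ _ (Gam0 k)) _.
    by rewrite le_eqVlt; apply/orP; left; apply/eqP/eq_bigr => l _; rewrite GamE.
  have C := core_real (fun k => nrm (G k - 1)) (fun k => nrm (G k)) (fun k => nrm_ge0 _) q0 hb stab_lim hr.
  have h1 k : nrm (G k) = 1.
    case: (C k) => // /nrm_eq0 /eqP; rewrite subr_eq0 => /eqP ->.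
    exact: nrm1.
  apply: boolp.funext => k; exact: final_real h1 k.
- move=> hl HG; apply: (part2 hl) => xi.
  have := stab_lim xi; rewrite HG.
  have -> : \sum_k \sum_l (S k l * rho k * rho l * xi k * xi l) * (nrm (1 : C) * nrm (1 : C))
    = \sum_k \sum_l S k l * rho k * rho l * xi k * xi l.
    by apply: eq_bigr => k _; apply: eq_bigr => l _; rewrite nrm1 !mulr1.
  by [].
Qed.

End Main.

Theorem mainTheorem5 (R : realType) (K : nat) (rho : 'I_K -> R) (S : 'M[R]_K)
  (g : R[i] -> 'I_K -> R[i]) :
  (0 < K)%N ->
  (forall k, 0 < rho k < 1) ->
  \sum_(k < K) rho k = 1 ->
  S^T = S ->
  (forall k l, 0 < S k l) ->
  (* g solves the QVE on H_- with values in (H_+)^K (this determines g uniquely) *)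
  (forall z : R[i], complex.Im z < 0 ->
     (forall k, 0 < complex.Im (g z k)) /\ QVE (Gamma rho S) z (g z)) ->
  (* g(1) is the value at z = 1 of the continuous extension of g to H_- \cup R *)
  (forall e : R, 0 < e -> exists2 d : R, 0 < d &
     forall z : R[i], complex.Im z <= 0 -> `|z - 1| < d%:C ->
       forall k, `|g z k - g 1 k| < e%:C) ->
  (lambda1 (Omega rho S) <= 1 -> g 1 = (fun _ => 1)) /\
  (1 < lambda1 (Omega rho S) -> g 1 <> (fun _ => 1)).
Proof.
move=> Kpos rhoP _ Ssym Spos gH gC.
exact: (@main_sec R K rho S g Kpos rhoP Ssym Spos gH gC).
Qed.
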